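(* Let $\sigma\colon O\to O'$ be an isomorphism of finite $Act$-labelled posets and let $O\rhd c_1$, $O\rhd c_2$ be P-markings. If $O\rhd c_1\sim_C O\rhd c_2$ then $O'\rhd c_1\sigma\sim_C O'\rhd c_2\sigma$.
   Context: Fix a set $Act$ of action labels, an infinite set $\mathcal{E}$ of event names and a net $N=(S,T,F,l)$ (disjoint places $S$ and transitions $T$, $F\subseteq(S\times T)\cup(T\times S)$, $l\colon T\to Act$, ${}^\bullet t=\{s:(s,t)\in F\}$, $t^\bullet=\{s:(t,s)\in F\}$ nonempty). Posets are finite $Act$-labelled posets $O=(X_O,\preccurlyeq_O,l_O)$, $X_O\subseteq\mathcal{E}$; $|O|=\{(x,l_O(x))\}$, $x_a=(x,a)$. Morphisms preserve order and labels ($\sigma(x_a)=\sigma(x)_a$); isomorphisms are bijective morphisms with morphism inverse. $\max_O K$: maximal elements of $K\subseteq|O|$; $K$ down-closed if $y\in K$, $x\preccurlyeq_O y$ imply $x\in K$. Causal markings: finite sets $c$ of pairs $K\vdash s$ ($s\in S$, $K$ finite $\subseteq\mathcal{E}\times Act$); $\mathcal{K}(c)$ union of cause sets, $|c|$ set of places, $K\vdash m=\{K\vdash s:s\in m\}$, $c\sigma=\{\sigma(K)\vdash s\}$. P-marking $O\rhd c$: cause sets are down-closed subsets of $|O|$. $\delta(O,K,e_a)$: $O$ plus event $e\notin X_O$ labelled $a$ above all of $K$, reflexive-transitively closed. Concrete causal case graph: $O\rhd c\cup c'\xrightarrow{K\vdash e_a}\delta(O,K,e_a)\rhd(\mathcal{K}(c)\cup\{e_a\}\vdash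 t^\bullet)\cup c'$ whenever $t\in T$, $O\rhd c\cup c'$ a P-marking, $|c|={}^\bullet t$, $a=l(t)$, $e\in\mathcal{E}\setminus X_O$, $K=\max_O\mathcal{K}(c)$. A concrete causal bisimulation is a family $\{R_O\}$ indexed by posets of relations on P-markings with: $(O_1\rhd c_1,O_2\rhd c_2)\in R_O$ implies $O_1=O_2=O$; if $(O\rhd c_1,O\rhd c_2)\in R_O$ and $O\rhd c_1\xrightarrow{K\vdash e_a}O'\rhd c_1'$ then $O\rhd c_2\xrightarrow{K\vdash e_a}O'\rhd c_2'$ with $(O'\rhd c_1',O'\rhd c_2')\in R_{O'}$, and vice versa. $\sim_C$ is the greatest one. *)

(* Defs.v *)
From HB Require Import structures.
From mathcomp Require Import all_boot.
From mathcomp Require Import finmap.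
From Stdlib Require Import Relations.Relation_Operators.

Set Implicit Arguments.
Unset Strict Implicit.
Unset Printing Implicit Defensive.

Local Open Scope fset_scope.

Section CausalBisim.

(* E : event names, Act : action labels, S : places, T : transitions. *)
Variables (E Act S T : choiceType).

(* Finite Act-labelled posets O = (X_O, <=_O, l_O), represented by the *)
(* set of labelled events |O| = {(x, l_O x)} and the order relation.   *)
Record poset := Poset { pev : {fset (E * Act)} ; pord : {fset (E * E)} }.

Definition pX (O : poset) : {fset E} := [fset x.1 | x in pev O].

Definition poset_wf (O : poset) : Prop :=
  (forall x y, x \in pev O -> y \in pev O -> x.1 = y.1 -> x = y) /\
  (forall p, p \in pord O -> p.1 \in pX O /\ p.2 \in pX O) /\
  (forall x, x \in pX O -> (x, x) \in pord O) /\
  (forall x y, (x, y) \in pord O -> (y, x) \in pord O -> x = y) /\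
  (forall x y z, (x, y) \in pord O -> (y, z) \in pord O -> (x, z) \in pord O).

Definition poset_morphism (O O' : poset) (sigma : E -> E) : Prop :=
  (forall x, x \in pev O -> (sigma x.1, x.2) \in pev O') /\
  (forall x y, (x, y) \in pord O -> (sigma x, sigma y) \in pord O').

Definition poset_iso (O O' : poset) (sigma : E -> E) : Prop :=
  exists tau : E -> E,
    poset_morphism O O' sigma /\ poset_morphism O' O tau /\
    (forall x, x \in pX O -> tau (sigma x) = x) /\
    (forall y, y \in pX O' -> sigma (tau y) = y).

Definition causes := {fset (E * Act)}.
Definition cmarking := {fset (causes * S)}.

Definition pmax (O : poset) (K : causes) : causes :=
  [fset y in K | [forall x : K, ((y.1, (val x).1) \in pord O) ==> (val x == y)]].

Definition down_closed (O : poset) (K : causes) : Prop :=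
  (forall x, x \in K -> x \in pev O) /\
  (forall x y, y \in K -> x \in pev O -> (x.1, y.1) \in pord O -> x \in K).

Definition cK (c : cmarking) : causes := \bigcup_(p <- c) (p.1 : causes).

Definition cplaces (c : cmarking) : {fset S} := [fset p.2 | p in c].

Definition cause_places (K : causes) (m : {fset S}) : cmarking :=
  [fset (K, s) | s in m].

Definition cmark_rename (c : cmarking) (sigma : E -> E) : cmarking :=
  [fset ([fset (sigma x.1, x.2) | x in (p.1 : causes)] : causes, p.2) | p in c].

Definition P_marking (O : poset) (c : cmarking) : Prop :=
  poset_wf O /\ forall p, p \in c -> down_closed O p.1.

(* O' = delta(O, K, e_a): O plus a new event e labelled a above all of K,
   with the order being the reflexive-transitive closure. *)
Definition delta_gen (O : poset) (K : causes) (e : E) (x y : E) : Prop :=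
  (x, y) \in pord O \/ (exists k, k \in K /\ x = k.1 /\ y = e).

Definition is_delta (O : poset) (K : causes) (e : E) (a : Act) (O' : poset) : Prop :=
  pev O' = pev O `|` [fset (e, a)] /\
  forall x y, (x, y) \in pord O' <->
    (x \in pX O' /\ y \in pX O' /\ clos_refl_trans E (delta_gen O K e) x y).

(* The net N = (S, T, F, l), F given by presets and postsets.          *)
Variables (pre post : T -> {fset S}) (l : T -> Act).

Definition ccstep (O : poset) (c : cmarking) (K : causes) (e : E) (a : Act)
    (O' : poset) (c' : cmarking) : Prop :=
  P_marking O c /\
  exists (t : T) (c1 c2 : cmarking),
    c = c1 `|` c2 /\ cplaces c1 = pre t /\ a = l t /\ e \notin pX O /\
    K = pmax O (cK c1) /\ is_delta O K e a O' /\
    c' = cause_places (cK c1 `|` [fset (e, a)]) (post t) `|` c2.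

(* concrete causal bisimulation: a family {R_O} of relations on P-markings
   with the same poset O (hence indexed by O) *)
Definition cc_bisim (R : poset -> cmarking -> cmarking -> Prop) : Prop :=
  (forall O c1 c2, R O c1 c2 -> P_marking O c1 /\ P_marking O c2) /\
  (forall O c1 c2, R O c1 c2 ->
     forall K e a O' c1', ccstep O c1 K e a O' c1' ->
       exists c2', ccstep O c2 K e a O' c2' /\ R O' c1' c2') /\
  (forall O c1 c2, R O c1 c2 ->
     forall K e a O' c2', ccstep O c2 K e a O' c2' ->
       exists c1', ccstep O c1 K e a O' c1' /\ R O' c1' c2').

Definition sim_C (O : poset) (c1 c2 : cmarking) : Prop :=
  exists R, cc_bisim R /\ R O c1 c2.

End CausalBisim.

(* Main.v *)
Require Import Defs.
From HB Require Import structures.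
From mathcomp Require Import all_boot.
From mathcomp Require Import finmap.
From Stdlib Require Import Relations.Relation_Operators Relations.Operators_Properties.
Set Implicit Arguments.
Unset Strict Implicit.
Unset Printing Implicit Defensive.
Local Open Scope fset_scope.

Section Aux.
Variables (E Act S : choiceType).
Implicit Types (O : poset E Act) (K C : causes E Act) (c : cmarking E Act S).

Definition ren C (f : E -> E) : causes E Act := [fset (f x.1, x.2) | x in C].

Lemma renP C f y : reflect (exists2 x, x \in C & y = (f x.1, x.2)) (y \in ren C f).
Proof. exact: imfsetP. Qed.

Lemma ren_in C f x : x \in C -> (f x.1, x.2) \in ren C f.
Proof. by move=> h; apply/renP; exists x. Qed.

Lemma pXP O x : reflect (exists2 p, p \in pev O & x = p.1) (x \in pX O).
Proof. exact: imfsetP. Qed.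

Lemma pX_in O p : p \in pev O -> p.1 \in pX O.
Proof. by move=> h; apply/pXP; exists p. Qed.

Lemma rename_ren c f : cmark_rename c f = [fset (ren p.1 f, p.2) | p in c].
Proof. by []. Qed.

Lemma pmaxP O K y : y \in pmax O K <->
  (y \in K /\ forall x, x \in K -> (y.1, x.1) \in pord O -> x = y).
Proof.
rewrite /pmax in_fset /= inE; split.
  move=> /andP[yK /forallP H]; split=> // x xK hxy.
  by have := H [` xK]; rewrite /= hxy /= => /eqP.
move=> [yK H]; rewrite yK /=; apply/forallP => -[x xK] /=.
by apply/implyP => h; rewrite (H x xK h).
Qed.

Lemma cKP c z : reflect (exists2 p, p \in c & z \in p.1) (z \in cK c).
Proof.
apply: (iffP (bigfcupP _ _ _ _)) => -[p]; rewrite ?andbT => h1 h2; by exists p; rewrite ?andbT.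
Qed.

End Aux.



Section Aux2.
Variables (E Act S : choiceType).
Implicit Types (O : poset E Act) (K C : causes E Act) (c : cmarking E Act S).

Lemma cK_rename c f : cK (cmark_rename c f) = ren (cK c) f.
Proof.
apply/fsetP => z; apply/cKP/renP.
  move=> [q /imfsetP [p pc ->] /= /renP [x xp ->]].
  by exists x => //; apply/cKP; exists p.
move=> [x /cKP [p pc xp] ->]; exists (ren p.1 f, p.2).
  by apply/imfsetP; exists p.
exact: ren_in.
Qed.

Lemma rename_U c1 c2 f : cmark_rename (c1 `|` c2) f = cmark_rename c1 f `|` cmark_rename c2 f.
Proof. exact: imfsetU. Qed.

Lemma cplaces_rename c f : cplaces (cmark_rename c f) = cplaces c.
Proof.
apply/fsetP => s; apply/imfsetP/imfsetP => /= -[p].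
  by move=> /imfsetP [q qc ->] ->; exists q.
by move=> pc ->; exists (ren p.1 f, p.2) => //; apply/imfsetP; exists p.
Qed.

Lemma rename_cp K (m : {fset S}) f : cmark_rename (cause_places K m) f = cause_places (ren K f) m.
Proof.
apply/fsetP => q; apply/imfsetP/imfsetP => /= -[p].
  by move=> /imfsetP [s sm ->] ->; exists s.
by move=> pm ->; exists (K, p) => //; apply/imfsetP; exists p.
Qed.

Lemma renU (A B : causes E Act) f : ren (A `|` B) f = ren A f `|` ren B f.
Proof. exact: imfsetU. Qed.

Lemma ren1 (x : E * Act) f : ren [fset x] f = [fset (f x.1, x.2)].
Proof.
apply/fsetP => z; rewrite in_fset1; apply/renP/eqP.
  by move=> [y]; rewrite in_fset1 => /eqP -> ->.
by move=> ->; exists x; rewrite ?in_fset1.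
Qed.

Lemma eq_ren C f f' : (forall x, x \in C -> f x.1 = f' x.1) -> ren C f = ren C f'.
Proof. by move=> h; apply: eq_in_imfset => x /= xC; rewrite h. Qed.

Lemma eq_rename c f f' : (forall p x, p \in c -> x \in p.1 -> f x.1 = f' x.1) ->
  cmark_rename c f = cmark_rename c f'.
Proof.
move=> h; rewrite !rename_ren; apply: eq_in_imfset => p /= pc.
by rewrite (@eq_ren p.1 f f') // => x; apply: h.
Qed.

Definition isoP O O1 (f g : E -> E) :=
  poset_morphism O O1 f /\ poset_morphism O1 O g /\
  (forall x, x \in pX O -> g (f x) = x) /\ (forall y, y \in pX O1 -> f (g y) = y).

Lemma isoP_sym O O1 f g : isoP O O1 f g -> isoP O1 O g f.
Proof. by move=> [? [? [? ?]]]; split=> //; split=> //; split. Qed.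

Lemma pmax_ren O O1 f g C : isoP O O1 f g -> (forall x, x \in C -> x \in pev O) ->
  pmax O1 (ren C f) = ren (pmax O C) f.
Proof.
move=> [[mf1 mf2] [[mg1 mg2] [gf fg]]] CO; apply/fsetP => y; apply/idP/idP.
  move=> /pmaxP [/renP [x xC ->] H]; apply: ren_in; apply/pmaxP; split=> // z zC hxz.
  have := H _ (ren_in f zC) (mf2 _ _ hxz) => -[e1 e2].
  have : g (f z.1) = g (f x.1) by rewrite e1.
  rewrite !gf ?pX_in ?CO // => e3.
  by move: e3 e2; case: z {zC hxz e1} => ? ? /= -> ->; case: x {xC H}.
move=> /renP [x /pmaxP [xC H] ->]; apply/pmaxP; split; first exact: ren_in.
move=> z /renP [w wC ->] /= h.
have := mg2 _ _ h; rewrite !gf ?pX_in ?CO // => h'.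
by rewrite (H _ wC h').
Qed.

Lemma P_marking_rename O O1 f g c : isoP O O1 f g -> poset_wf O1 -> P_marking O c ->
  P_marking O1 (cmark_rename c f).
Proof.
move=> [[mf1 mf2] [[mg1 mg2] [gf fg]]] wf1 [wf0 Hc]; split=> // q /imfsetP [p pc ->] /=.
have [d1 d2] := Hc p pc; split.
  by move=> x /renP [y yp ->]; apply: mf1; apply: d1.
move=> x y /renP [z zp ->] xO /= h.
have hx : (g x.1, x.2) \in pev O by exact: mg1.
have := mg2 _ _ h; rewrite gf ?pX_in ?d1 // => h'.
have := d2 _ _ zp hx h' => H.
have := ren_in f H; rewrite /= fg //; last exact: pX_in.
by case: x {xO h hx h' H}.
Qed.

Lemma rename_split c f d1 d2 : cmark_rename c f = d1 `|` d2 ->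
  exists e1 e2, c = e1 `|` e2 /\ cmark_rename e1 f = d1 /\ cmark_rename e2 f = d2.
Proof.
move=> h.
set rp := fun p : causes E Act * S => (ren p.1 f, p.2).
exists [fset p in c | rp p \in d1], [fset p in c | rp p \in d2].
have inr p : p \in c -> rp p \in d1 `|` d2 by move=> pc; rewrite -h; apply/imfsetP; exists p.
split; [|split].
- apply/fsetP => p; rewrite in_fsetU !inE.
  case pc: (p \in c) => //=; have := inr p pc; by rewrite in_fsetU.
- apply/fsetP => q; apply/imfsetP/idP.
    by move=> [p]; rewrite !inE /= => /andP [_ ?] ->.
  move=> qd; have : q \in d1 `|` d2 by rewrite in_fsetU qd.
  rewrite -h => /imfsetP [p pc eq]; exists p => //; rewrite !inE pc /=.
  by rewrite /rp -eq.
- apply/fsetP => q; apply/imfsetP/idP.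
    by move=> [p]; rewrite !inE /= => /andP [_ ?] ->.
  move=> qd; have : q \in d1 `|` d2 by rewrite in_fsetU qd orbT.
  rewrite -h => /imfsetP [p pc eq]; exists p => //; rewrite !inE pc /=.
  by rewrite /rp -eq.
Qed.

End Aux2.



Lemma crt_map (A : Type) (r r' : A -> A -> Prop) (P : A -> Prop) (f : A -> A) :
  (forall x z, P x -> r x z -> P z /\ r' (f x) (f z)) ->
  forall x y, P x -> clos_refl_trans A r x y -> clos_refl_trans A r' (f x) (f y).
Proof.
move=> H x y Px /clos_rt_rt1n_iff h; elim: h Px => [u|u v w ruv _ IH] Pu.
  exact: rt_refl.
have [Pv ruv'] := H _ _ Pu ruv.
apply: rt_trans (IH Pv); exact: rt_step.
Qed.

Section Aux3.
Variables (E Act : choiceType).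
Implicit Types (O : poset E Act) (K C : causes E Act).

Lemma pX_ev O e a O' : pev O' = pev O `|` [fset (e, a)] -> forall x, (x \in pX O') = (x \in pX O) || (x == e).
Proof.
move=> hev x; apply/pXP/orP.
  rewrite hev => -[p]; rewrite in_fsetU in_fset1 => /orP [pO ->|/eqP -> ->].
    by left; apply: pX_in.
  by right.
move=> [/pXP [p pO ->]|/eqP ->].
  by exists p => //; rewrite hev in_fsetU pO.
by exists (e, a) => //; rewrite hev in_fsetU in_fset1 eqxx orbT.
Qed.

Lemma pX_delta O K e a O' : is_delta O K e a O' -> forall x, (x \in pX O') = (x \in pX O) || (x == e).
Proof. by move=> [hev _]; apply: pX_ev hev. Qed.

Lemma crt_delta O K e x y : poset_wf O -> e \notin pX O ->
  clos_refl_trans E (delta_gen O K e) x y ->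
  x = y \/ (x, y) \in pord O \/ y = e.
Proof.
move=> [_ [hin [_ [_ htr]]]] eO; elim => {x y}.
- move=> x y [h|[k [_ [-> ->]]]]; by auto.
- by auto.
- move=> x y z _ IH1 _ IH2.
  case: IH1 => [exy|[h1|ye]]; first by rewrite exy.
    case: IH2 => [eyz|[h2|ze]]; first by rewrite -eyz; auto.
      by right; left; exact: htr h1 h2.
    by auto.
  case: IH2 => [eyz|[h2|ze]]; first by rewrite -eyz; auto.
    by have := hin _ h2 => -[/= h _]; rewrite -ye h in eO.
  by auto.
Qed.

Lemma wf_delta O K e a O' : poset_wf O -> e \notin pX O -> is_delta O K e a O' -> poset_wf O'.
Proof.
move=> wf eO hd; have hX := pX_delta hd; have [hev hord] := hd.
have wf' := wf; move: wf' => [hl [hin [hrefl [hanti htr]]]].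
split; [|split; [|split; [|split]]].
- move=> x y; rewrite hev !in_fsetU !in_fset1 => /orP [xO|/eqP ->] /orP [yO|/eqP ->] //=.
  + exact: hl.
  + by move=> h; have := pX_in xO; rewrite h /= (negPf eO).
  + by move=> h; have := pX_in yO; rewrite -h /= (negPf eO).
- by move=> [x y] /hord [? [? _]].
- by move=> x xO; apply/hord; split=> //; split=> //; apply: rt_refl.
- move=> x y /hord [_ [_ h1]] /hord [_ [_ h2]].
  case: (crt_delta wf eO h1) => [->|[h1'|ye]] //.
    case: (crt_delta wf eO h2) => [->|[h2'|xe]] //; first exact: hanti.
    by have := hin _ h1' => -[/= hy _]; move: hy; rewrite xe (negPf eO).
  case: (crt_delta wf eO h2) => [->|[h2'|xe]] //; last by rewrite xe ye.
  by have := hin _ h2' => -[/= hy _]; move: hy; rewrite ye (negPf eO).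
- move=> x y z /hord [hx [_ h1]] /hord [_ [hz h2]]; apply/hord; split=> //; split=> //.
  exact: rt_trans h1 h2.
Qed.

End Aux3.



Section Main.
Variables (E Act S T : choiceType).
Hypothesis E_infinite : forall s : {fset E}, exists e : E, e \notin s.
Variables (pre post : T -> {fset S}) (l : T -> Act).
Implicit Types (O : poset E Act) (K C : causes E Act) (c : cmarking E Act S).

Definition causes_in O c := forall p x, p \in c -> x \in p.1 -> x \in pev O.

Lemma Pm_causes O c : P_marking O c -> causes_in O c.
Proof. by move=> [_ H] p x pc xp; have [h _] := H p pc; apply: h. Qed.

Lemma result_rename O (f f' : E -> E) e0 e a (d1 d2 : cmarking E Act S) (m : {fset S}) :
  causes_in O d1 -> causes_in O d2 -> e0 \notin pX O ->
  (forall x, x != e0 -> f' x = f x) -> f' e0 = e ->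
  cmark_rename (cause_places (cK d1 `|` [fset (e0, a)]) m `|` d2) f' =
  cause_places (cK (cmark_rename d1 f) `|` [fset (e, a)]) m `|` cmark_rename d2 f.
Proof.
move=> h1 h2 he0 hf hfe.
have ne p x : causes_in O p -> forall q, q \in p -> x \in q.1 -> x.1 != e0.
  move=> hp q qp xq; apply/eqP => ex; have := pX_in (hp _ _ qp xq).
  by rewrite ex (negPf he0).
rewrite rename_U rename_cp renU ren1 /= hfe cK_rename.
congr (cause_places (_ `|` _) _ `|` _).
  apply: eq_ren => x /cKP [q qd xq]; apply: hf; exact: (ne _ _ h1 q).
apply: eq_rename => q x qd xq; apply: hf; exact: (ne _ _ h2 q).
Qed.


Definition Rt (R : poset E Act -> cmarking E Act S -> cmarking E Act S -> Prop) O1 a b :=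
  poset_wf O1 /\ exists O0 f g c1 c2, R O0 c1 c2 /\ isoP O0 O1 f g /\
     a = cmark_rename c1 f /\ b = cmark_rename c2 f.

Lemma transfer R : cc_bisim pre post l R ->
  forall O0 O1 f g c1 c2, R O0 c1 c2 -> isoP O0 O1 f g -> poset_wf O1 ->
  forall K e a O1' c1', ccstep pre post l O1 (cmark_rename c1 f) K e a O1' c1' ->
  exists c2', ccstep pre post l O1 (cmark_rename c2 f) K e a O1' c2' /\ Rt R O1' c1' c2'.
Proof.
move=> [B1 [B2 _]] O0 O1 f g c1 c2 HR iso wf1 K e a O1' c1'
  [Pm1 [t [d1 [d2 [hsplit [hpre [ha [he [hK [hd hc']]]]]]]]]].
have [P0c1 P0c2] := B1 _ _ _ HR.
have wf0 := P0c1.1.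
have iso' := iso; move: iso' => [[mf1 mf2] [[mg1 mg2] [gf fg]]].
have [e1 [e2 [hc1 [he1 he2]]]] := rename_split hsplit.
have ci1 := Pm_causes P0c1.
have ci_e1 : causes_in O0 e1 by move=> p x pe1 xp; apply: (ci1 p) => //; rewrite hc1 in_fsetU pe1.
have ci_e2 : causes_in O0 e2 by move=> p x pe1 xp; apply: (ci1 p) => //; rewrite hc1 in_fsetU pe1 orbT.
have [e0 he0] := E_infinite (pX O0).
pose f' := fun x => if x == e0 then e else f x.
pose g' := fun y => if y == e then e0 else g y.
have fX x : x \in pX O0 -> f x \in pX O1.
  by move=> /pXP [p pO ->]; apply: (pX_in (mf1 _ pO)).
have gX y : y \in pX O1 -> g y \in pX O0.
  by move=> /pXP [p pO ->]; apply: (pX_in (mg1 _ pO)).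
have F1 x : x \in pX O0 -> f' x = f x.
  by move=> xO; rewrite /f'; case: eqP => // ex; move: xO; rewrite ex (negPf he0).
have G1 y : y \in pX O1 -> g' y = g y.
  by move=> yO; rewrite /g'; case: eqP => // ey; move: yO; rewrite ey (negPf he).
have F3 : f' e0 = e by rewrite /f' eqxx.
have G3 : g' e = e0 by rewrite /g' eqxx.
pose K0 := pmax O0 (cK e1).
have K0in k : k \in K0 -> k \in pev O0.
  by move=> /pmaxP [/cKP [p pe1 kp] _]; apply: ci_e1 kp.
have hK' : K = ren K0 f.
  rewrite hK -he1 cK_rename (pmax_ren iso) //.
  by move=> x /cKP [p pe1 xp]; apply: ci_e1 xp.
have hX1' := pX_delta hd.
have [hev1 hord1] := hd.
pose O0' := Poset (pev O0 `|` [fset (e0, a)]) [fset (g' p.1, g' p.2) | p in pord O1'].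
have hX0' : forall x, (x \in pX O0') = (x \in pX O0) || (x == e0) by exact: pX_ev.
have FX' x : x \in pX O0' -> f' x \in pX O1' /\ g' (f' x) = x.
  rewrite hX0' hX1' => /orP [xO|/eqP ->]; last by rewrite F3 G3 eqxx orbT.
  by rewrite F1 // G1 ?gf ?fX // fX.
have GX' y : y \in pX O1' -> g' y \in pX O0' /\ f' (g' y) = y.
  rewrite hX0' hX1' => /orP [yO|/eqP ->]; last by rewrite G3 F3 eqxx orbT.
  by rewrite G1 // F1 ?fg ?gX // gX.
have wf1' : poset_wf O1' by apply: wf_delta hd.
have hd0 : is_delta O0 K0 e0 a O0'.
  split=> // x y; split.
    move=> /imfsetP [[p1 p2] /= pO [-> ->]].
    have [p1X [p2X hcrt]] := (hord1 p1 p2).1 pO.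
    split; first exact: (GX' _ p1X).1.
    split; first exact: (GX' _ p2X).1.
    apply: (crt_map (P := fun u => u \in pX O1')) hcrt => // u z uX [hp|[k [kK [-> ->]]]].
      have [hu hz] := wf1.2.1 _ hp; split; first by rewrite hX1' hz.
      by left; rewrite /= G1 // G1 //; apply: mg2.
    split; first by rewrite hX1' eqxx orbT.
    right; rewrite G3; move: kK; rewrite hK' => /renP [k0 k0K ->].
    exists k0; split=> //; split=> //=.
    by rewrite G1 ?gf ?pX_in ?K0in // fX // pX_in // K0in.
  move=> [xX [yX hcrt]].
  have : clos_refl_trans E (delta_gen O1 K e) (f' x) (f' y).
    apply: (crt_map (P := fun u => u \in pX O0')) hcrt => // u z uX [hp|[k0 [k0K [-> ->]]]].
      have [hu hz] := wf0.2.1 _ hp; split; first by rewrite hX0' hz.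
      by left; rewrite /= F1 // F1 //; apply: mf2.
    split; first by rewrite hX0' eqxx orbT.
    right; rewrite F3; exists (f k0.1, k0.2); split; first by rewrite hK' ren_in.
    by rewrite F1 // pX_in // K0in.
  move=> h; have hp : (f' x, f' y) \in pord O1'.
    by apply/hord1; split; [exact: (FX' _ xX).1 | split; [exact: (FX' _ yX).1|]].
  apply/imfsetP; exists (f' x, f' y) => //=.
  by rewrite (FX' _ xX).2 (FX' _ yX).2.
have iso0' : isoP O0' O1' f' g'.
  split; [split|split; [split|split]].
  - move=> x /=; rewrite in_fsetU in_fset1 => /orP [xO|/eqP ->]; rewrite hev1 in_fsetU.
      by rewrite F1 ?pX_in // mf1.
    by rewrite /= F3 in_fset1 eqxx orbT.
  - move=> x y /imfsetP [[p1 p2] /= pO [-> ->]].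
    have [p1X [p2X _]] := (hord1 p1 p2).1 pO.
    by rewrite (GX' _ p1X).2 (GX' _ p2X).2.
  - move=> x; rewrite hev1 in_fsetU in_fset1 => /orP [xO|/eqP ->]; rewrite /= in_fsetU.
      by rewrite G1 ?pX_in // mg1.
    by rewrite G3 in_fset1 eqxx orbT.
  - by move=> x y h; apply/imfsetP; exists (x, y).
  - by move=> x /FX' [].
  - by move=> y /GX' [].
pose c1'0 := cause_places (cK e1 `|` [fset (e0, a)]) (post t) `|` e2.
have step0 : ccstep pre post l O0 c1 K0 e0 a O0' c1'0.
  split=> //; exists t, e1, e2; do !split => //.
  by rewrite -hpre -he1 cplaces_rename.
have [c2'0 [step0' HR']] := B2 _ _ _ HR _ _ _ _ _ step0.
move: step0' => [P0c2' [t2 [f1 [f2 [hs2 [hpre2 [ha2 [he02 [hK2 [hd2 hc2']]]]]]]]]].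
have ci2 := Pm_causes P0c2.
have ci_f1 : causes_in O0 f1 by move=> p x pe1 xp; apply: (ci2 p) => //; rewrite hs2 in_fsetU pe1.
have ci_f2 : causes_in O0 f2 by move=> p x pe1 xp; apply: (ci2 p) => //; rewrite hs2 in_fsetU pe1 orbT.
have F2 x : x != e0 -> f' x = f x by rewrite /f' => /negPf ->.
exists (cmark_rename c2'0 f'); split.
  split; first exact: (P_marking_rename iso).
  exists t2, (cmark_rename f1 f), (cmark_rename f2 f); do !split => //.
  - by rewrite hs2 rename_U.
  - by rewrite cplaces_rename.
  - rewrite hK' hK2 cK_rename (pmax_ren iso) //.
    by move=> x /cKP [p pe1 xp]; apply: ci_f1 xp.
  - by rewrite hc2' (result_rename _ _ ci_f1 ci_f2 he0 F2 F3).
split=> //; exists O0', f', g', c1'0, c2'0; do !split => //.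
by rewrite hc' -he1 -he2 (result_rename _ _ ci_e1 ci_e2 he0 F2 F3).
Qed.


Lemma flip_bisim R : cc_bisim pre post l R -> cc_bisim pre post l (fun O a b => R O b a).
Proof.
move=> [B1 [B2 B3]]; split; first by move=> O a b /B1 [].
by split=> O a b h K e x O' c' st; [have [c [? ?]] := B3 _ _ _ h _ _ _ _ _ st|
  have [c [? ?]] := B2 _ _ _ h _ _ _ _ _ st]; exists c.
Qed.

Lemma Rt_bisim R : cc_bisim pre post l R -> cc_bisim pre post l (Rt R).
Proof.
move=> HB; have HB' := HB; move: HB' => [B1 _]; split; [|split].
- move=> O a b [wf [O0 [f [g [c1 [c2 [HR [iso [-> ->]]]]]]]]].
  have [P1 P2] := B1 _ _ _ HR.
  by split; apply: (P_marking_rename iso).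
- move=> O a b [wf [O0 [f [g [c1 [c2 [HR [iso [-> ->]]]]]]]]] K e x O' c' st.
  exact: (transfer HB HR iso wf st).
- move=> O a b [wf [O0 [f [g [c1 [c2 [HR [iso [-> ->]]]]]]]]] K e x O' c' st.
  have [c [st' [wf' [O1 [f1 [g1 [d1 [d2 [HR' [iso' [h1 h2]]]]]]]]]]] :=
    transfer (flip_bisim HB) (c1 := c2) (c2 := c1) HR iso wf st.
  exists c; split=> //; split=> //; exists O1, f1, g1, d2, d1; do !split=> //.
Qed.

End Main.

Theorem lemma6 (E Act S T : choiceType)
    (E_infinite : forall s : {fset E}, exists e : E, e \notin s)
    (pre post : T -> {fset S}) (l : T -> Act)
    (post_nonempty : forall t : T, post t != fset0)
    (O O' : poset E Act) (sigma : E -> E)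
    (HO : poset_wf O) (HO' : poset_wf O')
    (Hsigma : poset_iso O O' sigma)
    (c1 c2 : cmarking E Act S)
    (Hc1 : P_marking O c1) (Hc2 : P_marking O c2) :
  sim_C pre post l O c1 c2 ->
  sim_C pre post l O' (cmark_rename c1 sigma) (cmark_rename c2 sigma).
Proof.
move=> [R [HB HR]]; move: Hsigma => [tau [m1 [m2 [h1 h2]]]].
exists (Rt R); split; first exact: Rt_bisim.
split=> //; exists O, sigma, tau, c1, c2; do !split => //.
Qed.
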